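(* Let $s\ge 1$ and let $n_1,\dots,n_s,k_1,\dots,k_s$ be positive integers. Then there exist finitely many polynomials $g_i\in\mathbb{Q}[X]$ and positive integers $m_i,\ell_i$ with $\ell_i\le n_1+\cdots+n_s$ for every $i$, such that $$\frac{1}{(X^{k_1}-1)^{n_1}\cdots(X^{k_s}-1)^{n_s}}=\sum_{i}\frac{g_i}{(X^{m_i}-1)^{\ell_i}}$$ in the field of rational functions $\mathbb{Q}(X)$. *)

(* Defs.v *)
From HB Require Import structures.
From mathcomp Require Import all_boot all_order all_algebra fraction.
Set Implicit Arguments. Unset Strict Implicit. Unset Printing Implicit Defensive.
Import Order.TTheory GRing.Theory Num.Theory.
(* Q(X) is modelled as {fraction {poly rat}}, with the embedding p%:F. *)
Notation "x %:F" := (@FracField.tofrac _ x) : ring_scope.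

(* Main.v *)
Require Import Defs.
From HB Require Import structures.
From mathcomp Require Import all_boot all_order all_algebra fraction.
Import Order.TTheory GRing.Theory Num.Theory.
Local Open Scope ring_scope.

Lemma Xsub1_dvd (k d : nat) :
  exists q : {poly rat}, 'X^(k * d) - 1 = ('X^k - 1) * q.
Proof.
exists (\sum_(i < d) ('X^k) ^+ (d.-1 - i) * 1 ^+ i).
by rewrite -subrXX exprM expr1n.
Qed.

Lemma Xsub1_neq0 (M : nat) : (0 < M)%N -> ('X^M - 1 : {poly rat}) != 0.
Proof. by move=> hM; rewrite -polyC1 monic_neq0 // monicXnsubC. Qed.

Theorem lemma2p1 (s : nat) (hs : (1 <= s)%N) (n k : 'I_s -> nat)
    (hn : forall j, (0 < n j)%N) (hk : forall j, (0 < k j)%N) :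
  exists r : seq ({poly rat} * nat * nat),
    (forall t, t \in r ->
        [/\ (0 < t.1.2)%N, (0 < t.2)%N & (t.2 <= \sum_(j < s) n j)%N]) /\
    (\prod_(j < s) ((('X^(k j) - 1) ^+ (n j) : {poly rat})%:F))^-1
      = \sum_(t <- r) (t.1.1)%:F / ((('X^(t.1.2) - 1) ^+ t.2 : {poly rat})%:F).
Proof.
set M := (\prod_(j < s) k j)%N.
set L := (\sum_(j < s) n j)%N.
have hM : (0 < M)%N by apply: prodn_gt0.
have hL : (0 < L)%N.
  by rewrite /L (bigD1 (Ordinal hs)) //= ltn_addr.
have hq : forall j, exists q : {poly rat}, 'X^M - 1 == ('X^(k j) - 1) * q.
  move=> j; rewrite /M (bigD1 j) //.
  by have [q ->] := Xsub1_dvd (k j) (\prod_(i < s | i != j) k i)%N; exists q.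
pose q j := xchoose (hq j).
have qE j : 'X^M - 1 = ('X^(k j) - 1) * q j := eqP (xchooseP (hq j)).
pose g := \prod_(j < s) q j ^+ n j.
pose P := \prod_(j < s) (('X^(k j) - 1) ^+ (n j) : {poly rat}).
have HPg : ('X^M - 1) ^+ L = P * g.
  rewrite /L /P /g -big_split /= -prodrXr; apply: eq_bigr => j _.
  by rewrite (qE j) exprMn.
exists [:: (g, M, L)]; split.
  by move=> t; rewrite inE => /eqP -> /=; split.
rewrite big_cons big_nil addr0 /= HPg rmorphM /= -rmorph_prod /=.
have hPg0 : P * g != 0 by rewrite -HPg expf_neq0 // Xsub1_neq0.
have hP0 : (P%:F) != 0 by rewrite tofrac_eq0; apply: contraNneq hPg0 => ->; rewrite mul0r.
have hg0 : (g%:F) != 0 by rewrite tofrac_eq0; apply: contraNneq hPg0 => ->; rewrite mulr0.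
by rewrite invfM mulrC -mulrA mulVf // mulr1.
Qed.
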